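(* Let $d, n \in \mathbb{N}$ and let $k$ be an integer with $0 \leq k \leq d$. The minimum number of $k$-dimensional affine subspaces of $\mathbb{R}^d$ whose union contains the lattice cube $\{0,\ldots,n-1\}^d$ is $n^{d-k}$.
   Context: The lattice cube $\{0,\ldots,n-1\}^d$ is viewed as a subset of $\mathbb{R}^d$. *)

(* Defs.v *)
From HB Require Import structures.
From mathcomp Require Import all_boot all_order all_algebra.
From mathcomp Require Import reals.
Set Implicit Arguments. Unset Strict Implicit. Unset Printing Implicit Defensive.
Import Order.TTheory GRing.Theory Num.Theory.
Local Open Scope ring_scope.

Definition in_lattice_cube (R : realType) (d n : nat) (x : 'rV[R]_d) : Prop :=
  forall i : 'I_d, exists m : nat, (m < n)%N /\ x ord0 i = m%:R.

Definition affine_subspace (R : realType) (d : nat)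
  (p : 'rV[R]_d) (V : {vspace 'rV[R]_d}) : 'rV[R]_d -> Prop :=
  fun x => (x - p) \in V.

Definition covers_cube_by (R : realType) (d n k m : nat) : Prop :=
  exists (p : 'I_m -> 'rV[R]_d) (V : 'I_m -> {vspace 'rV[R]_d}),
    (forall j, \dim (V j) = k) /\
    (forall x, in_lattice_cube n x -> exists j, affine_subspace (p j) (V j) x).

(* Main.v *)
Require Import Defs.
From HB Require Import structures.
From mathcomp Require Import all_boot all_order all_algebra.
From mathcomp Require Import reals.
From mathcomp Require Import zify.
Set Implicit Arguments. Unset Strict Implicit. Unset Printing Implicit Defensive.
Import Order.TTheory GRing.Theory Num.Theory.
Local Open Scope ring_scope.

Definition emb (R : realType) d n (g : {ffun 'I_d -> 'I_n}) : 'rV[R]_d :=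
  \row_i ((g i : nat)%:R).

Lemma grid_bound (R : realType) d n (p : 'rV[R]_d) (V : {vspace 'rV[R]_d})
  (P : pred {ffun 'I_d -> 'I_n}) :
  (forall g, P g -> (emb R g - p) \in V) -> (#|P| <= n ^ \dim V)%N.
Proof.
move=> hP.
set k' := \dim V.
pose M : 'M[R]_(k', d) := \matrix_i (vbasis V)`_i.
have hfree : row_free M.
  apply: inj_row_free => v hv.
  have /freeP /(_ (v 0)) := basis_free (vbasisP V).
  rewrite mulmx_sum_row in hv.
  have -> : \sum_(i < k') v 0 i *: (vbasis V)`_i = \sum_i v 0 i *: row i M.
    by apply: eq_bigr => i _; rewrite rowK.
  move=> /(_ hv) h; apply/matrixP => a b; rewrite ord1 h !mxE //.
have hV : forall x, x \in V -> exists c : 'rV_k', x = c *m M.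
  move=> x hx; exists (\row_i coord (vbasis V) i x).
  rewrite mulmx_sum_row {1}(coord_vbasis hx); apply: eq_bigr => i _.
  by rewrite rowK mxE.
pose f := maxrankfun M^T.
pose N := rowsub f M^T.
have rN : \rank N = k'.
  by rewrite (eqP (maxrowsub_free _)) mxrank_tr (eqP hfree).
have hNT : row_free N^T by rewrite /row_free mxrank_tr rN.
have key : forall (c : 'rV[R]_k') (j : 'I_(\rank M^T)), (c *m M) 0 (f j) = (c *m N^T) 0 j.
  by move=> c j; rewrite !mxE; apply: eq_bigr => i _; rewrite !mxE.
pose h (g : {ffun 'I_d -> 'I_n}) := [ffun j => g (f j)].
have hinj : {in P &, injective h}.
  move=> g1 g2 h1 h2 e.
  have : emb R g1 - emb R g2 \in V.
    have -> : emb R g1 - emb R g2 = (emb R g1 - p) - (emb R g2 - p).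
      by rewrite opprB addrA subrK.
    by rewrite memvB // hP.
  move=> /hV [c hc].
  have c0 : c = 0.
    apply: (row_free_inj hNT); rewrite mul0mx; apply/matrixP => a j.
    rewrite ord1 -key -hc !mxE.
    have := congr1 (fun F : 'I_n ^ \rank M^T => F j) e; rewrite /h !ffunE => ->.
    by rewrite subrr.
  apply/ffunP => i; apply: val_inj => /=.
  have := congr1 (fun F : 'rV[R]_d => F 0 i) hc; rewrite c0 mul0mx !mxE => /eqP.
  by rewrite subr_eq0 eqr_nat => /eqP.
rewrite -(card_in_imset hinj).
apply: leq_trans (max_card _) _.
by rewrite card_ffun !card_ord mxrank_tr (eqP hfree).
Qed.
Lemma lower (R : realType) (d n k m : nat) (hn : (0 < n)%N) (hk : (k <= d)%N) :
  covers_cube_by R d n k m -> (n ^ (d - k) <= m)%N.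
Proof.
move=> [p [V [hdim hcov]]].
have : forall g : {ffun 'I_d -> 'I_n}, exists j, (emb R g - p j) \in V j.
  move=> g; apply: hcov => i; exists (g i); split => //.
  by rewrite mxE.
move=> /fin_all_exists [J hJ].
have hcard : #|{ffun 'I_d -> 'I_n}| = (n ^ d)%N by rewrite card_ffun !card_ord.
have : (n ^ d <= m * n ^ k)%N.
  rewrite -hcard -sum1_card (partition_big J predT) //=.
  apply: leq_trans (_ : (\sum_(j < m) n ^ k <= _)%N); last first.
    by rewrite sum_nat_const card_ord.
  apply: leq_sum => j _.
  rewrite sum1_card -(hdim j); apply: (grid_bound (p := p j)) => g /= /eqnP/ord_inj hg; rewrite -hg; exact: hJ.
rewrite -{1}(subnK hk) expnD leq_pmul2r //.
by rewrite expn_gt0 hn.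
Qed.
Lemma upper (R : realType) (d n k : nat) (hk : (k <= d)%N) :
  covers_cube_by R d n k (n ^ (d - k)).
Proof.
pose T := {ffun 'I_(d - k) -> 'I_n}.
have cardT : #|T| = (n ^ (d - k))%N by rewrite card_ffun !card_ord.
pose e (j : 'I_(n ^ (d - k))) : T := enum_val (cast_ord (esym cardT) j).
pose p (j : 'I_(n ^ (d - k))) : 'rV[R]_d := \row_(i < d)
  (if (k <= i)%N then
     match (insub (i - k)%N : option 'I_(d - k)) with
     | Some t => ((e j t : nat)%:R : R) | None => 0 end
   else 0).
pose X : k.-tuple 'rV[R]_d := [tuple delta_mx 0 (widen_ord hk i) | i < k].
have hX : forall i : 'I_k, X`_i = delta_mx 0 (widen_ord hk i).
  by move=> i; rewrite -tnth_nth tnth_mktuple.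
exists p, (fun _ => <<X>>%VS); split.
  move=> _; have : free X.
    apply/freeP => c hc i.
    have := congr1 (fun F : 'rV[R]_d => F 0 (widen_ord hk i)) hc.
    rewrite summxE (bigD1 i) // big1 ?addr0.
      by rewrite hX !mxE !eqxx mulr1 => <-; exact: (esym (addr0 _)).
    move=> l /= hl; rewrite hX !mxE eqxx /=.
    have -> : (widen_ord hk i == widen_ord hk l) = false.
      apply/negbTE; apply: contra hl => /eqP/(congr1 val) /= hv.
      by apply/eqP/val_inj.
    by rewrite mulr0.
  by move=> /eqP ->; rewrite size_tuple.
move=> x hx.
have : forall i : 'I_d, exists mm : 'I_n, x ord0 i = (mm : nat)%:R.
  move=> i; have [m [hm ->]] := hx i; by exists (Ordinal hm).
move=> /fin_all_exists [mm hmm].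
have hidx : forall t : 'I_(d - k), (k + t < d)%N.
  move=> t; have := ltn_ord t; lia.
pose g : T := [ffun t => mm (Ordinal (hidx t))].
exists (cast_ord cardT (enum_rank g)).
have eg : e (cast_ord cardT (enum_rank g)) = g by rewrite /e cast_ordK enum_rankK.
have hspan : forall w : 'rV[R]_d, (forall b : 'I_d, (k <= b)%N -> w 0 b = 0) -> w \in <<X>>%VS.
  move=> w hw.
  have -> : w = \sum_(i < k) w 0 (widen_ord hk i) *: X`_i.
    apply/matrixP => a b; rewrite ord1 summxE.
    case: (ltnP b k) => hb.
      rewrite (bigD1 (Ordinal hb)) // big1.
        rewrite hX.
        have -> : widen_ord hk (Ordinal hb) = b by apply: val_inj.
        rewrite !mxE !eqxx mulr1.
        exact: (esym (addr0 _)).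
      move=> l /= hl; rewrite hX !mxE eqxx /=.
      have -> : (b == widen_ord hk l) = false.
        apply/negbTE; apply: contra hl => /eqP/(congr1 val) /= hv.
        by apply/eqP/val_inj.
      by rewrite mulr0.
    rewrite big1 ?hw //.
    move=> l _; rewrite hX !mxE eqxx /=.
    have -> : (b == widen_ord hk l) = false.
      apply/negbTE/eqP => /(congr1 val) /= hv.
      have := ltn_ord l; lia.
    by rewrite mulr0.
  apply: memv_suml => i _; apply: memvZ; apply: memv_span.
  apply: mem_nth; by rewrite size_tuple.
rewrite /affine_subspace; apply: hspan => b hb.
rewrite !mxE hb eg.
case: insubP => [t _ tE | ].
  rewrite ffunE hmm.
  have -> : Ordinal (hidx t) = b by apply: val_inj => /=; have tE2 : (t : nat) = (b - k)%N := tE; rewrite tE2; lia.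
  by rewrite subrr.
move=> /negP; case; have := ltn_ord b; lia.
Qed.

Theorem corollary2 (R : realType) (d n k : nat) (hn : (0 < n)%N) (hk : (k <= d)%N) :
  covers_cube_by R d n k (n ^ (d - k)) /\
  (forall m : nat, covers_cube_by R d n k m -> (n ^ (d - k) <= m)%N).
Proof.
split; first exact: upper.
by move=> m; apply: lower.
Qed.
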